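(* Let $n\geq 2$ and let $k$ be a positive integer with $k+2^k-1\leq n$. For every prime number $p$ with $n-2^k+1\leq p\leq (n-k-2^k+3)2^k-3$, there is an arithmetical structure $(r_1,\dots,r_n)$ on $K_n$ with $r_1=p$.
   Context: An arithmetical structure on the complete graph $K_n$ is an $n$-tuple $(r_1,r_2,\dots,r_n)$ of positive integers with $\gcd(r_1,\dots,r_n)=1$ such that $r_j$ divides $\sum_{i=1}^n r_i$ for every $j$. The entries are always listed so that $r_1\geq r_2\geq\dots\geq r_n$; thus $r_1$ is the largest value of the structure. *)

(* Defs.v *)
From mathcomp Require Import all_boot.

Definition arith_struct_Kn (n : nat) (r : seq nat) : Prop :=
  [/\ size r = n,
      all (fun x => 0 < x) r,
      sorted geq r,
      foldr gcdn 0 r = 1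
    & all (fun x => x %| sumn r) r].

(* Main.v *)
Require Import Defs.
From mathcomp Require Import all_boot.
From mathcomp Require Import zify.

Lemma gcd_fold_dvd (l : seq nat) (x : nat) : x \in l -> foldr gcdn 0 l %| x.
Proof.
elim: l => [//|a l IH] /=; rewrite in_cons => /orP [/eqP ->|/IH h].
  exact: dvdn_gcdl.
exact: dvdn_trans (dvdn_gcdr _ _) h.
Qed.

Lemma bin (j r : nat) : r < 2 ^ j -> exists es : seq nat,
  [/\ all (fun e => e < j) es, sumn (map (expn 2) es) = r, size es <= j
    & (r.+1 < 2 ^ j -> size es < j)].
Proof.
elim: j r => [|j IH] r.
  rewrite expn0 ltnS leqn0 => /eqP ->; exists [::]; split => //.
rewrite expnS => hr.
case: (ltnP r (2 ^ j)) => hrj.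
  have [es [h1 h2 h3 h4]] := IH r hrj.
  exists es; split.
  - by apply/allP => e /(allP h1) /= he; apply: ltnW.
  - by [].
  - by apply: leqW.
  - by move=> _; rewrite ltnS.
have hr' : r - 2 ^ j < 2 ^ j by lia.
have [es [h1 h2 h3 h4]] := IH _ hr'.
exists [:: j & es]; split => /=.
- rewrite ltnSn /=; by apply/allP => e /(allP h1) /= he; apply: ltnW.
- lia.
- by rewrite ltnS.
- move=> hh; rewrite ltnS; apply: h4; lia.
Qed.

Lemma sum_ge_size (es : seq nat) : size es <= sumn (map (expn 2) es).
Proof. elim: es => [//|e es IH] /=; have := expn_gt0 2 e; lia. Qed.

Lemma sum_eq_size (es : seq nat) : ~~ has (fun e => 0 < e) es ->
  sumn (map (expn 2) es) = size es.
Proof.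
elim: es => [//|e es IH] /=; rewrite negb_or => /andP [h1 h2].
rewrite lt0n negbK in h1; rewrite (eqP h1) expn0 IH //.
Qed.

Lemma split_es (d : nat) (k : nat) (es : seq nat) :
  all (fun e => e <= k) es -> size es + d <= sumn (map (expn 2) es) ->
  exists es', [/\ all (fun e => e <= k) es', size es' = size es + d
     & sumn (map (expn 2) es') = sumn (map (expn 2) es)].
Proof.
elim: d es => [|d IH] es hall hs.
  by exists es; rewrite addn0.
have : has (fun e => 0 < e) es.
  apply/negPn/negP => hn; move: (sum_eq_size _ hn) hs => ->; lia.
case/hasP => e he he0.
have hp := perm_to_rem he.
set es1 := e.-1 :: e.-1 :: rem e es.
have hsum : sumn (map (expn 2) es1) = sumn (map (expn 2) es).
  rewrite (perm_sumn (perm_map _ hp)) /= -[in 2 ^ e](prednK he0) expnS.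
  lia.
have hall1 : all (fun e => e <= k) es1.
  move: hall; rewrite (perm_all _ hp) /= => /andP [h1 h2].
  rewrite h2 andbT; apply/andP; split; apply: leq_trans h1; exact: leq_pred.
have hsz : size es1 = (size es).+1.
  have hpos : 0 < size es by case: (es) he.
  by rewrite /= size_rem // prednK.
have [es' [h1 h2 h3]] := IH es1 hall1 ltac:(rewrite hsz hsum; lia).
exists es'; split => //; [rewrite h2 hsz; lia | rewrite h3 hsum //].
Qed.

Lemma path_nseq_cat (x j : nat) (l : seq nat) :
  path geq x l -> path geq x (nseq j x ++ l).
Proof. by elim: j => [//|j IH] /= h; rewrite leqnn IH. Qed.

Lemma mem_le_sumn (l : seq nat) (x : nat) : x \in l -> x <= sumn l.
Proof.
elim: l => [//|a l IH] /=; rewrite in_cons => /orP [/eqP ->|/IH h].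
  exact: leq_addr.
exact: leq_trans h (leq_addl _ _).
Qed.

Theorem proposition2p5 (n k p : nat) :
  2 <= n -> 0 < k -> k + 2 ^ k - 1 <= n ->
  prime p ->
  n + 1 - 2 ^ k <= p -> p <= (n + 3 - k - 2 ^ k) * 2 ^ k - 3 ->
  exists r : seq nat, arith_struct_Kn n r /\ head 0 r = p.
Proof.
move=> hn hk hkn hp hlo hhi.
have hK2 : 2 <= 2 ^ k.
  by case: k hk {hkn hlo hhi} => // k' _; rewrite expnS; have := expn_gt0 2 k'; lia.
have hp2 := prime_gt1 hp.
set K := 2 ^ k in hK2 hkn hlo hhi.
set t := n + 1 - K.
set m := n + 3 - k - K.
have hdiv := divn_eq p K.
have hr : p %% K < K by rewrite ltn_pmod //; lia.
set q := p %/ K in hdiv.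
set r := p %% K in hdiv hr.
have [esr [hr1 hr2 hr3 hr4]] := bin _ _ hr.
have hq : q < m.
  rewrite ltnNge; apply/negP => h; have := leq_mul h (leqnn K); lia.
have hsz0 : q + size esr <= t.
  case: (eqVneq q.+1 m) => hqm.
    have hmK : m * K = q * K + K by rewrite -hqm mulSn addnC.
    have : size esr < k by apply: hr4; lia.
    lia.
  lia.
set es0 := nseq q k ++ esr.
have hall0 : all (fun e => e <= k) es0.
  rewrite all_cat all_nseq leqnn orbT /=.
  by apply/allP => e /(allP hr1) /= he; apply: ltnW.
have hsum0 : sumn (map (expn 2) es0) = p.
  by rewrite map_cat sumn_cat map_nseq sumn_nseq hr2 hdiv mulnC.
have hsize0 : size es0 = q + size esr by rewrite size_cat size_nseq.
have [es [hall hsize hsum]] :=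
  @split_es (t - size es0) k es0 hall0 ltac:(rewrite hsum0 hsize0; lia).
rewrite hsum0 in hsum.
have {}hsize : size es = t by rewrite hsize hsize0; lia.
set s := map (expn 2) es.
have hsums : sumn s = p by [].
have hsizes : size s = t by rewrite size_map.
have hperm : perm_eq (sort geq s) s by rewrite perm_sort.
have ht1 : 1 <= t by rewrite /t; lia.
exists (p :: nseq (K - 2) p ++ sort geq s); split => //.
have hsumr : sumn (p :: nseq (K - 2) p ++ sort geq s) = K * p.
  rewrite /= sumn_cat sumn_nseq (perm_sumn hperm) hsums.
  rewrite -[in RHS](subnK hK2) mulnDl; lia.
split.
- rewrite /= size_cat size_nseq size_sort hsizes /t; lia.
- rewrite /= all_cat all_nseq (perm_all _ hperm) prime_gt0 // orbT /=.
  by apply/allP => x /mapP [e _ ->]; rewrite expn_gt0.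
- rewrite /= path_nseq_cat // path_sortedE; last first.
    by move=> y x z /= h1 h2; apply: leq_trans h2 h1.
  rewrite sort_sorted; last by move=> x y; apply: leq_total.
  rewrite (perm_all _ hperm) andbT.
  by apply/allP => x hx /=; rewrite -hsums; apply: mem_le_sumn.
- set L := p :: _.
  have [x hxL hcop] : exists2 x, x \in L & coprime p x.
    case: (even_prime hp) => hp2'.
      (* p = 2: t = 2, s contains 1 *)
      have ht2 : 2 <= t.
        rewrite leqNgt; apply/negP => ht.
        have hnK : n = K by rewrite /t in ht ht1; lia.
        rewrite hnK hp2' in hhi.
        have : k = 1 \/ k = 2 \/ 3 <= k by lia.
        case=> [hk1|[hk1|hk1]].
        + move: hhi; rewrite /K hk1 expn1; lia.
        + move: hhi; rewrite /K hk1; have -> : 2 ^ 2 = 4 by []; lia.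
        + have h0 : K + 3 - k - K = 0 by lia.
          by move: hhi; rewrite h0 mul0n.
      have hst : size s = 2 by have : t <= p by []; rewrite hsizes; lia.
      move: hsums hsizes hst; rewrite hp2'.
      case Es: s => [|a [|b [|c l]]] //= hab _ _.
      have ha : 0 < a.
        have : a \in s by rewrite Es mem_head.
        by case/mapP => e _ ->; rewrite expn_gt0.
      have hb : 0 < b.
        have : b \in s by rewrite Es !in_cons eqxx orbT.
        by case/mapP => e _ ->; rewrite expn_gt0.
      exists 1; last by rewrite /coprime gcdn1.
      have -> : 1 = a by lia.
      rewrite /L in_cons mem_cat (perm_mem hperm) Es mem_head !orbT //.
    case Ees: es hsize ht1 => [|e es'] hsz ht1'; first by rewrite -hsz in ht1'.
    exists (2 ^ e).
      rewrite /L in_cons mem_cat (perm_mem hperm) /s Ees /= mem_head !orbT //.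
    by apply: coprimeXr; rewrite coprimen2.
  have h1 := gcd_fold_dvd _ _ (mem_head p _ : p \in L).
  have h2 := gcd_fold_dvd _ _ hxL.
  have : foldr gcdn 0 L %| gcdn p x by rewrite dvdn_gcd h1 h2.
  rewrite (eqP hcop) dvdn1 => /eqP ->.
  by [].
- rewrite hsumr /= dvdn_mull //= all_cat all_nseq dvdn_mull // orbT /=.
  rewrite (perm_all _ hperm); apply/allP => x /mapP [e he ->].
  apply: dvdn_mulr; apply: dvdn_exp2l; exact: (allP hall).
Qed.
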